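(* Let $G$ be a group and $(A,B)$ a VH-structure in $G$. Let $S_{A,B}$ be the square complex with a single vertex $x$, oriented edge set $A\sqcup B$ with orientation reversal $e\mapsto e^{-1}$, and with one square for each relation $ab = b'a'$ in $G$ with $a,a'\in A$, $b,b'\in B$, namely the square given by the 4-tuple $(a,b,a'^{-1},b'^{-1})$, where the four 4-tuples $(a,b,a'^{-1},b'^{-1})$, $(a',b^{-1},a^{-1},b')$, $(a^{-1},b',a',b^{-1})$, $(a'^{-1},b'^{-1},a,b)$ (coming from the equivalent relations $a'b^{-1}=b'^{-1}a$, $a^{-1}b'=ba'^{-1}$, $a'^{-1}b'^{-1}=b^{-1}a^{-1}$) define the same square. Then the link $\mathrm{Lk}_x$ of $S_{A,B}$ at $x$ is the complete bipartite graph with one class of vertices labelled by $A$ and the other labelled by $B$.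
   Context: A VH-structure in a group $G$ is an ordered pair $(A,B)$ of finite subsets of $G$ such that: (1) taking inverses induces fixed-point-free involutions on $A$ and on $B$; (2) $A\cup B$ generates $G$; (3) the product sets $AB$ and $BA$ have size $\#A\cdot\#B$ and $AB=BA$; (4) $AB$ and $BA$ contain no elements of order $2$. The link $\mathrm{Lk}_x$ at a vertex $x$ of a square complex is the (multi-)graph whose vertices are the oriented edges originating at $x$ and whose edges joining $a,b$ are the corners of squares at $x$ containing the edges $a$ and $b$. *)

(* Defs.v *)
From mathcomp Require Import all_boot monoid.
Set Implicit Arguments.
Unset Strict Implicit.
Unset Printing Implicit Defensive.
Local Open Scope group_scope.

(* Finite subsets of the (possibly infinite) group G are duplicate-free
   sequences; they are only used through membership and cardinality. *)
Section VH.
Variable G : groupType.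

Definition prodset (X Y : seq G) : seq G := [seq x * y | x <- X, y <- Y].

Definition inv_fpf_involution (X : seq G) : Prop :=
  forall x, x \in X -> (x^-1 \in X) /\ (x^-1 != x).

Definition generates (S : seq G) : Prop :=
  forall g : G, exists w : seq G,
    all (fun x => (x \in S) || (x^-1 \in S)) w /\ g = \prod_(x <- w) x.

Definition order_two (g : G) : bool := (g * g == 1) && (g != 1).

Definition VH_structure (A B : seq G) : Prop :=
  [/\ uniq A /\ uniq B,
      inv_fpf_involution A /\ inv_fpf_involution B,
      generates (A ++ B),
      [/\ size (undup (prodset A B)) = (size A * size B)%N,
          size (undup (prodset B A)) = (size A * size B)%N &
          prodset A B =i prodset B A] &
      (forall g, g \in prodset A B -> ~~ order_two g) /\
      (forall g, g \in prodset B A -> ~~ order_two g)].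

(* Oriented edges of S_{A,B}: the disjoint union A ⊔ B, encoded as
   inl a (a in A) and inr b (b in B); orientation reversal is e |-> e^-1. *)
Definition edge := (G + G)%type.

Definition is_edge (A B : seq G) (e : edge) : bool :=
  match e with inl a => a \in A | inr b => b \in B end.

Definition rev_edge (e : edge) : edge :=
  match e with inl a => inl a^-1 | inr b => inr b^-1 end.

(* a relation a b = b' a' is recorded as the quadruple (a, b, a', b') *)
Definition rel := (G * G * G * G)%type.

Definition relations (A B : seq G) : seq rel :=
  filter (fun r : rel => let: (a, b, a', b') := r in a * b == b' * a')
    [seq (ab.1, ab.2, ab'.1, ab'.2)
       | ab <- [seq (a, b) | a <- A, b <- B],
         ab' <- [seq (a', b') | a' <- A, b' <- B]].

Definition boundary (r : rel) : edge * edge * edge * edge :=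
  let: (a, b, a', b') := r in (inl a, inr b, inl a'^-1, inr b'^-1).

(* the three equivalent relations a'b^-1 = b'^-1 a, a^-1 b' = b a'^-1,
   a'^-1 b'^-1 = b^-1 a^-1, giving the tuples
   (a',b^-1,a^-1,b'), (a^-1,b',a',b^-1), (a'^-1,b'^-1,a,b) *)
Definition equiv_rels (r : rel) : seq rel :=
  let: (a, b, a', b') := r in
  [:: (a, b, a', b'); (a', b^-1, a, b'^-1); (a^-1, b', a'^-1, b);
      (a'^-1, b'^-1, a^-1, b^-1)].

Definition same_square (r r' : rel) : bool := r' \in equiv_rels r.

Fixpoint square_reps (s : seq rel) : seq rel :=
  match s with
  | [::] => [::]
  | r :: s' => r :: [seq r' <- square_reps s' | ~~ same_square r r']
  end.

Definition squares (A B : seq G) : seq rel := square_reps (relations A B).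

(* corners of a square with boundary (e1,e2,e3,e4): the corner between
   e_i and e_{i+1} joins the oriented edges e_i^-1 and e_{i+1}
   (both originating at the vertex between them) *)
Definition corners (t : edge * edge * edge * edge) : seq (edge * edge) :=
  let: (e1, e2, e3, e4) := t in
  [:: (rev_edge e1, e2); (rev_edge e2, e3); (rev_edge e3, e4);
      (rev_edge e4, e1)].

(* all corners of all squares at the unique vertex x (edges of Lk_x) *)
Definition link_edges (A B : seq G) : seq (edge * edge) :=
  flatten [seq corners (boundary r) | r <- squares A B].

Definition link_mult (A B : seq G) (u v : edge) : nat :=
  count (fun c => (c == (u, v)) || (c == (v, u))) (link_edges A B).

Definition link_vertex (A B : seq G) (e : edge) : bool := is_edge A B e.

Definition side_A (e : edge) : bool := if e is inl _ then true else false.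

End VH.

(* Main.v *)
Require Import Defs.
From mathcomp Require Import all_boot monoid.
Set Implicit Arguments.
Unset Strict Implicit.
Unset Printing Implicit Defensive.

Section Generic.
Variable T : eqType.
Variable f : T -> seq T.
Hypothesis frefl : forall x, x \in f x.
Hypothesis fcls : forall x y, y \in f x -> f y =i f x.

Fixpoint sreps (s : seq T) : seq T :=
  match s with
  | [::] => [::]
  | r :: s' => r :: [seq r' <- sreps s' | r' \notin f r]
  end.

Lemma filter_sreps (P : pred T) s :
  (forall x y, y \in f x -> P x = P y) ->
  [seq z <- sreps s | P z] = sreps [seq z <- s | P z].
Proof.
move=> HP; elim: s => //= x s IH.
case Px: (P x) => /=.
  rewrite -IH -!filter_predI; congr (_ :: _); apply: eq_filter => z /=.
  by rewrite andbC.
rewrite -IH -filter_predI; apply: eq_filter => z /=.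
case Pz: (P z) => //=.
apply/negP => zf.
by move: (HP _ _ zf); rewrite Px Pz.
Qed.

Lemma fsym x y : y \in f x -> x \in f y.
Proof. by move=> /fcls ->. Qed.

Lemma flat_sreps s :
  uniq s -> (forall r, r \in s -> uniq (f r) /\ {subset f r <= s}) ->
  perm_eq (flatten (map f (sreps s))) s.
Proof.
have [n] := ubnP (size s); elim: n s => [|n IH] s Hn //.
case: s Hn => [//|r s'] /= Hn /andP[rs' us'] Hs.
have := Hs r (mem_head _ _) => -[ufr sfr].
rewrite (@filter_sreps (fun z => z \notin f r)); last first.
  move=> x y yx; congr negb; apply/idP/idP => H.
    by rewrite -(fcls H).
  by rewrite -(fcls H); apply: fsym.
set t := [seq z <- s' | z \notin f r].
have Ht : perm_eq (flatten (map f (sreps t))) t.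
  apply: IH.
  - by rewrite size_filter; apply: leq_ltn_trans (count_size _ _) Hn.
  - by rewrite filter_uniq.
  - move=> x; rewrite mem_filter => /andP[xr xs'].
    have [ufx sfx] := Hs x (mem_behead (s:=r::s') xs').
    split=> // z zx; rewrite mem_filter.
    have zrs := sfx z zx; rewrite inE in zrs.
    apply/andP; split.
      apply/negP => zr; move: xr; rewrite -(fcls zr).
      by move/negP; apply; apply: fsym.
    case/orP: zrs => // /eqP zr; subst z.
    by rewrite (fsym zx) in xr.
rewrite -(perm_cat2l (f r)) in Ht; apply: (perm_trans Ht).
apply: uniq_perm.
- rewrite cat_uniq ufr filter_uniq // andbT.
  by apply/hasPn => z; rewrite mem_filter => /andP[].
- by rewrite /= rs' us'.
move=> z; rewrite mem_cat mem_filter inE.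
case zr: (z \in f r) => /=.
  have := sfr z zr; by rewrite inE.
apply/idP/idP => [->|/orP[/eqP zr'|//]]; first by rewrite orbT.
by move: zr; rewrite zr' frefl.
Qed.
End Generic.

Section S.
Variable G : groupType.
Local Open Scope group_scope.
Lemma equiv_refl (r : Defs.rel G) : r \in equiv_rels r.
Proof. by case: r => [[[a b] c] d]; rewrite /= inE eqxx. Qed.

Lemma equiv_cls (r y : Defs.rel G) : y \in equiv_rels r -> equiv_rels y =i equiv_rels r.
Proof.
case: r => [[[a b] c] d]; rewrite /= !inE => /or4P [] /eqP -> z; rewrite /= !inE ?invgK;
  by case: (z == _); case: (z == _); case: (z == _); case: (z == _); rewrite ?orbT.
Qed.

Lemma mem_rel (A B : seq G) a b c d :
  ((a, b, c, d) \in relations A B) = [&& a \in A, b \in B, c \in A & d \in B] && (a * b == d * c).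
Proof.
rewrite mem_filter andbC; congr (_ && _).
apply/allpairsP/idP.
  case=> -[[p q] [p' q']] /= [] /allpairsP [[x y] /= [xA yB [-> ->]]].
  by move=> /allpairsP [[x' y'] /= [xA' yB' [-> ->]]] [-> -> -> ->]; rewrite xA yB xA' yB'.
case/and4P => aA bB cA dB; exists ((a,b),(c,d)); split => //; by apply: allpairs_f.
Qed.

Lemma uniq_map_inj (T U : eqType) (g : T -> U) l : uniq (map g l) -> {in l &, injective g}.
Proof.
elim: l => //= x l IH /andP[gx ul] y z; rewrite !inE => /orP[/eqP->|yl] /orP[/eqP->|zl] //.
- by move=> e; move: gx; rewrite e map_f.
- by move=> e; move: gx; rewrite -e map_f.
- exact: IH.
Qed.

Lemma prod_inj (X Y : seq G) : size (undup (prodset X Y)) = (size X * size Y)%N ->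
  forall x1 x2 y1 y2, x1 \in X -> x2 \in X -> y1 \in Y -> y2 \in Y ->
  x1 * y1 = x2 * y2 -> x1 = x2 /\ y1 = y2.
Proof.
move=> Hs x1 x2 y1 y2 x1X x2X y1Y y2Y e.
have U : uniq (prodset X Y).
  apply: negbNE; rewrite -ltn_size_undup Hs /prodset size_allpairs ltnn //.
move: U; rewrite /prodset -(map_allpairs (fun p => p.1 * p.2) pair) => /uniq_map_inj H.
have := H (x1, y1) (x2, y2) (allpairs_f pair x1X y1Y) (allpairs_f pair x2X y2Y) e.
by case.
Qed.

Lemma uniq_rel (A B : seq G) : uniq A -> uniq B -> uniq (relations A B).
Proof.
move=> uA uB; rewrite filter_uniq //.
have uAB : uniq [seq (a, b) | a <- A, b <- B].
  by apply: allpairs_uniq => // -[p q] [p' q'] _ _ /= [-> ->].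
apply: allpairs_uniq => // -[[p q] [p' q']] [[r s] [r' s']] _ _ /= [-> -> -> ->] //.
Qed.

Section VHsec.
Variables A B : seq G.
Hypothesis HVH : VH_structure A B.

Lemma vh_uA : uniq A. Proof. by case: HVH => -[]. Qed.
Lemma vh_uB : uniq B. Proof. by case: HVH => -[]. Qed.
Lemma vh_iA : inv_fpf_involution A. Proof. by case: HVH => _ []. Qed.
Lemma vh_iB : inv_fpf_involution B. Proof. by case: HVH => _ []. Qed.
Lemma vh_injAB : forall x1 x2 y1 y2, x1 \in A -> x2 \in A -> y1 \in B -> y2 \in B ->
  x1 * y1 = x2 * y2 -> x1 = x2 /\ y1 = y2.
Proof. by apply: prod_inj; case: HVH => _ _ _ []. Qed.
Lemma vh_injBA : forall x1 x2 y1 y2, x1 \in B -> x2 \in B -> y1 \in A -> y2 \in A ->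
  x1 * y1 = x2 * y2 -> x1 = x2 /\ y1 = y2.
Proof. by apply: prod_inj; case: HVH => _ _ _ [] _; rewrite mulnC. Qed.
Lemma vh_eqAB : prodset A B =i prodset B A. Proof. by case: HVH => _ _ _ []. Qed.
Lemma vh_o2 : forall g, g \in prodset A B -> ~~ order_two g. Proof. by case: HVH => _ _ _ _ []. Qed.

Lemma no_special a b c d : a \in A -> b \in B -> a * b = d * c -> c = a^-1 -> d = b^-1 -> False.
Proof.
move=> aA bB e ec ed; subst c d.
have ab1 : a * b = 1.
  have := vh_o2 (allpairs_f (fun x y => x * y) aA bB); rewrite /order_two negb_and negbK.
  have sq : a * b * (a * b) = 1 by rewrite {1}e -invgM mulVg.
  by rewrite sq eqxx /= => /eqP.
have ba : b = a^-1 by rewrite -(mulKg a b) ab1 mulg1.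
have [aiA _] := vh_iA aA.
have [biB _] := vh_iB bB.
rewrite ba invgK in biB.
have aiB : a^-1 \in B by rewrite -ba.
have [e1 _] := vh_injAB aA aiA aiB biB (etrans (mulgV a) (esym (mulVg a))).
by have [_] := vh_iA aA; rewrite -e1 eqxx.
Qed.

Lemma rel_props r : r \in relations A B ->
  uniq (equiv_rels r) /\ {subset equiv_rels r <= relations A B}.
Proof.
case: r => [[[a b] c] d]; rewrite mem_rel => /andP[/and4P[aA bB cA dB] /eqP e].
have [aiA na] := vh_iA aA; have [ciA nc] := vh_iA cA.
have [biB nb] := vh_iB bB; have [diB nd] := vh_iB dB.
split.
  rewrite /= !inE !negb_or !andbT.
  apply/and3P; split; [apply/and3P; split|apply/andP; split|].
  - by apply/eqP => -[_ /eqP]; rewrite eq_sym (negbTE nb).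
  - by apply/eqP => -[/eqP]; rewrite eq_sym (negbTE na).
  - by apply/eqP => -[ea eb ec ed]; apply: (no_special aA bB e).
  - by apply/eqP => -[ec eb ea ed]; apply: (no_special aA bB e) => //; rewrite -ed invgK.
  - by apply/eqP => -[/eqP]; rewrite eq_sym (negbTE nc).
  - by apply/eqP => -[_ _ _ /eqP]; rewrite eq_sym (negbTE nb).
move=> z; rewrite /= !inE => /or4P [] /eqP ->; rewrite mem_rel ?invgK.
- by rewrite aA bB cA dB e eqxx.
- rewrite cA biB aA diB /=; apply/eqP; apply: (mulgI d).
  by rewrite mulgA -e mulgK mulVKg.
- rewrite aiA dB ciA bB /=; apply/eqP; apply: (mulgI a).
  by rewrite mulVKg mulgA e mulgK.
- by rewrite ciA diB aiA biB /= -!invgM e.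
Qed.
End VHsec.
End S.

Section Main.
Variable G : groupType.
Local Open Scope group_scope.

Lemma square_reps_sreps (s : seq (Defs.rel G)) : square_reps s = sreps (@equiv_rels G) s.
Proof. by elim: s => //= r s ->. Qed.

Definition key (c : edge G * edge G) : option (G * G) :=
  match c with
  | (inl x, inr y) => Some (x, y)
  | (inr y, inl x) => Some (x, y)
  | _ => None
  end.

Definition phi (r : Defs.rel G) : option (G * G) :=
  let: (a, b, _, _) := r in Some (a^-1, b).

Lemma perm_map_flat (T : Type) (U : eqType) (F H : T -> seq U) s :
  (forall x, perm_eq (F x) (H x)) -> perm_eq (flatten (map F s)) (flatten (map H s)).
Proof. by move=> FH; elim: s => //= x s IH; rewrite perm_cat. Qed.

Lemma key_corners r : perm_eq (map key (corners (boundary r))) (map phi (equiv_rels r)).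
Proof.
case: r => [[[a b] c] d]; rewrite /= !invgK !perm_cons.
by apply/permP => p /=; rewrite !addn0 addnC.
Qed.

Variables A B : seq G.
Hypothesis HVH : VH_structure A B.

Lemma perm_key : perm_eq (map key (link_edges A B)) (map phi (relations A B)).
Proof.
rewrite /link_edges map_flatten -map_comp.
apply: perm_trans (perm_map_flat _ (fun r => key_corners r)) _.
have -> : [seq phi y | r <- squares A B, y <- equiv_rels r] =
  map phi (flatten (map (@equiv_rels G) (squares A B))) by rewrite map_flatten -map_comp.
apply: perm_map.
rewrite /squares square_reps_sreps; apply: flat_sreps.
- exact: equiv_refl.
- exact: equiv_cls.
- exact: uniq_rel (vh_uA HVH) (vh_uB HVH).
- exact: rel_props.
Qed.

Lemma count_phi x y : count (fun r => phi r == Some (x, y)) (relations A B) =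
  ((x^-1 \in A) && (y \in B)).
Proof.
case H: ((x^-1 \in A) && (y \in B)).
  case/andP: H => xA yB.
  have := vh_eqAB HVH (x^-1 * y); rewrite (allpairs_f (fun a b => a * b) xA yB).
  case/esym/allpairsP => -[d c] /= [dB cA e].
  rewrite (eq_in_count (a2 := pred1 (x^-1, y, c, d))).
    by rewrite count_uniq_mem ?mem_rel ?xA ?yB ?cA ?dB ?e ?eqxx //; apply: uniq_rel (vh_uA HVH) (vh_uB HVH).
  move=> -[[[a b] c'] d']; rewrite mem_rel => /andP[/and4P[aA bB cA' dB'] /eqP e'] /=.
  apply/eqP/eqP => [[ea eb]|[-> -> _ _]]; last by rewrite invgK.
  have ea' : a = x^-1 by rewrite -ea invgK.
  subst a b.
  have [-> ->] := vh_injBA HVH dB' dB cA' cA (etrans (esym e') e).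
  by [].
apply/eqP; rewrite -leqn0 leqNgt -has_count; apply/hasPn.
move=> -[[[a b] c'] d']; rewrite mem_rel => /andP[/and4P[aA bB cA' dB'] _] /=.
apply/eqP => -[ea eb]; move: H; subst b.
by rewrite -ea invgK aA bB.
Qed.

Lemma inv_memA x : (x^-1 \in A) = (x \in A).
Proof.
apply/idP/idP => H; last by case: (vh_iA HVH H).
by have [] := vh_iA HVH H; rewrite invgK.
Qed.

End Main.

Lemma eLL (G : groupType) (p x : G) : ((inl p : edge G) == inl x) = (p == x).
Proof. by apply/eqP/eqP => [[]|->]. Qed.
Lemma eRR (G : groupType) (p x : G) : ((inr p : edge G) == inr x) = (p == x).
Proof. by apply/eqP/eqP => [[]|->]. Qed.
Lemma eLR (G : groupType) (p x : G) : ((inl p : edge G) == inr x) = false.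
Proof. by apply/eqP. Qed.
Lemma eRL (G : groupType) (p x : G) : ((inr p : edge G) == inl x) = false.
Proof. by apply/eqP. Qed.
Lemma eSS (T : eqType) (p x : T) : (Some p == Some x) = (p == x).
Proof. by apply/eqP/eqP => [[]|->]. Qed.
Lemma eNS (T : eqType) (x : T) : (None == Some x) = false.
Proof. by apply/eqP. Qed.

Theorem lemma1 (G : groupType) (A B : seq G) :
  VH_structure A B ->
  (forall u v : edge G,
     link_mult A B u v =
     (if [&& link_vertex A B u, link_vertex A B v & side_A u != side_A v]
      then 1 else 0)%N).
Proof.
move=> HVH u v.
have Hperm := perm_key HVH.
have Hkey : forall c, c \in link_edges A B -> key c != None.
  move=> c cL; have := map_f (@key G) cL; rewrite (perm_mem Hperm) => /mapP [[[[a b] c'] d'] _ ->].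
  by [].
have Hcnt : forall x y, count (fun c => key c == Some (x, y)) (link_edges A B) =
    ((x \in A) && (y \in B)).
  move=> x y; rewrite -(inv_memA HVH) -count_phi //.
  by rewrite -(count_map (@key G) (pred1 (Some (x, y)))) (permP Hperm) count_map.
case: u => [x|y]; case: v => [x'|y'] /=.
- rewrite !andbF; apply/eqP; rewrite -leqn0 leqNgt -has_count; apply/hasPn => c cL.
  by apply/negP => /orP[] /eqP ce; move: (Hkey c cL); rewrite ce.
  rewrite andbT /link_mult (eq_count (a2 := fun c => key c == Some (x, y'))) ?Hcnt.
    by case: (_ && _).
  move=> [[p|p] [q|q]] /=;
    by rewrite !xpair_eqE ?eLL ?eRR ?eLR ?eRL ?eSS ?eNS ?xpair_eqE ?andbF ?orbF //= andbC.
- rewrite andbT /link_mult (eq_count (a2 := fun c => key c == Some (x', y))).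
    by rewrite Hcnt andbC; case: (_ && _).
  move=> [[p|p] [q|q]] /=;
    by rewrite !xpair_eqE ?eLL ?eRR ?eLR ?eRL ?eSS ?eNS ?xpair_eqE ?andbF ?orbF //= andbC.
- rewrite !andbF; apply/eqP; rewrite -leqn0 leqNgt -has_count; apply/hasPn => c cL.
  by apply/negP => /orP[] /eqP ce; move: (Hkey c cL); rewrite ce.
Qed.
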